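(* For $\sigma \in \mathfrak{S}_j$ and $\tau \in \mathfrak{S}_k$, let $\sigma^{-1}=\sigma^{-1}_1\cdots \sigma^{-1}_j$ and $\tau^{-1}=\tau^{-1}_1\cdots \tau^{-1}_k$ denote the inverses of $\sigma$ and $\tau$ respectively. Define $\pi=\sigma^{-1}_1\cdots \sigma^{-1}_j$ and $\delta=(j+1)(\tau^{-1}_1+j+1)\cdots (\tau^{-1}_k+j+1)$. Then \begin{align*} \sum_{\mu \in \sigma \lozenge \tau} t^{\mathrm{ides}(\mu)}&=\sum_{\alpha \in \mathrm{Sh}_l(\pi,\delta)} t^{\mathrm{des}(\alpha)},\\ \sum_{\mu \in \sigma \vartriangle \tau} t^{\mathrm{ides}(\mu)}&=\sum_{\alpha \in \mathrm{Sh}_{ls}(\pi,\delta)} t^{\mathrm{des}(\alpha)},\\ \sum_{\mu \in \sigma \triangledown \tau} t^{\mathrm{ides}(\mu)}&=\sum_{\alpha \in \mathrm{Sh}_{ll}(\pi,\delta)} t^{\mathrm{des}(\alpha)}. \end{align*}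
   Context: $\mathfrak{S}_n$ is the set of permutations of $[n]$. For a permutation $\alpha=\alpha_1\cdots\alpha_n$, $\mathrm{des}(\alpha)$ is the number of indices $i$ with $\alpha_i>\alpha_{i+1}$, and $\mathrm{ides}(\alpha)=\mathrm{des}(\alpha^{-1})$. For $\sigma\in\mathfrak{S}_j$, $\tau\in\mathfrak{S}_k$: $\sigma \lozenge\tau =\{ \mu = \sigma'1\tau' \in \mathfrak{S}_{j+k+1} : \sigma' \sim \sigma,\ \tau' \sim \tau \}$; $\sigma \vartriangle \tau =\{ \mu = \sigma'1\tau' \in \mathfrak{S}_{j+k+1} : \sigma' \sim \sigma,\ \tau' \sim \tau,\ j+k+1\in \tau' \}$; $\sigma \triangledown \tau =\{ \mu = \sigma'1\tau' \in \mathfrak{S}_{j+k+1} : \sigma' \sim \sigma,\ \tau' \sim \tau,\ 2\in \tau' \}$, where $\sigma'\sim\sigma$ means that reducing the letters of $\sigma'$ order-preservingly to $\{1,\dots,j\}$ yields $\sigma$. A permutation of length $n$ here means a sequence of $n$ distinct integers. For disjoint permutations $\pi=\pi_1\cdots\pi_m$ and $\delta=\delta_1\cdots\delta_n$ (no common letters), a shuffle of $\pi$ and $\delta$ is a permutation $\alpha=\alpha_1\cdots\alpha_{m+n}$ containing both $\pi$ and $\delta$ as subsequences. $\mathrm{Sh}_l(\pi,\delta)$ is the set of shuffles $\alpha$ of $\pi$ and $\delta$ with $\alpha_1=\delta_1$; $\mathrm{Sh}_{ls}(\pi,\delta)$ is the set of shuffles with $\alpha_1=\delta_1$ and $\alpha_{n+m}=\delta_n$;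 $\mathrm{Sh}_{ll}(\pi,\delta)$ is the set of shuffles with $\alpha_1=\delta_1$ and $\alpha_2=\delta_2$. *)

(* Defs.v *)
From mathcomp Require Import all_boot all_order all_algebra.
Set Implicit Arguments. Unset Strict Implicit. Unset Printing Implicit Defensive.

(* Words (permutations in one-line notation) are sequences of naturals. *)

Definition des (a : seq nat) : nat := count (fun p => p.2 < p.1) (zip a (behead a)).

Definition is_permn (n : nat) (s : seq nat) : bool := perm_eq s (iota 1 n).

(* inverse of a permutation word of [n]: position (1-based) of letter i *)
Definition inv_word (s : seq nat) : seq nat := [seq (index i s).+1 | i <- iota 1 (size s)].

Definition ides (s : seq nat) : nat := des (inv_word s).

(* order-preserving reduction of a word of distinct letters to {1,...,size s} *)
Definition std (s : seq nat) : seq nat := [seq count (fun y => y <= x) s | x <- s].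

Definition lozenge (j k : nat) (sigma tau : seq nat) : seq (seq nat) :=
  [seq mu <- permutations (iota 1 (j + k + 1)) |
     [&& nth 0 mu j == 1, std (take j mu) == sigma & std (drop j.+1 mu) == tau]].

Definition tri_up (j k : nat) (sigma tau : seq nat) : seq (seq nat) :=
  [seq mu <- lozenge j k sigma tau | (j + k + 1) \in drop j.+1 mu].

Definition tri_down (j k : nat) (sigma tau : seq nat) : seq (seq nat) :=
  [seq mu <- lozenge j k sigma tau | 2 \in drop j.+1 mu].

Definition shuffles (pi delta : seq nat) : seq (seq nat) :=
  [seq a <- permutations (pi ++ delta) | subseq pi a && subseq delta a].

Definition Sh_l (pi delta : seq nat) : seq (seq nat) :=
  [seq a <- shuffles pi delta | (0 < size delta) && (nth 0 a 0 == nth 0 delta 0)].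

Definition Sh_ls (pi delta : seq nat) : seq (seq nat) :=
  [seq a <- Sh_l pi delta | last 0 a == last 0 delta].

Definition Sh_ll (pi delta : seq nat) : seq (seq nat) :=
  [seq a <- Sh_l pi delta | (1 < size delta) && (nth 0 a 1 == nth 0 delta 1)].

Definition genpoly (stat : seq nat -> nat) (l : seq (seq nat)) : {poly int} :=
  \sum_(x <- l) 'X^(stat x).

(* Main.v *)
Require Import Defs.
From mathcomp Require Import all_boot all_order all_algebra.
From mathcomp Require Import zify.

Lemma index_map_in (T1 T2 : eqType) (f : T1 -> T2) (s : seq T1) x :
  {in s &, injective f} -> x \in s -> index (f x) (map f s) = index x s.
Proof.
elim: s => //= a s IH inj; rewrite inE => /orP[/eqP->|xs]; first by rewrite !eqxx.
case: (a =P x) => [->|ax]; first by rewrite eqxx.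
have -> : (f a == f x) = false.
  apply/negbTE/eqP => E; apply: ax; apply: inj => //; rewrite inE ?eqxx ?xs ?orbT //.
rewrite IH // => u v us vs; apply: inj; rewrite inE ?us ?vs orbT //.
Qed.

Lemma map_index_self (T : eqType) (S : seq T) :
  uniq S -> map (index ^~ S) S = iota 0 (size S).
Proof.
case: S => // x0 S' uS; apply: (@eq_from_nth _ 0); rewrite size_map ?size_iota // => i hi.
by rewrite (nth_map x0) // nth_iota // index_uniq.
Qed.

Lemma index_inj_in (T : eqType) (S : seq T) : {in S &, injective (index ^~ S)}.
Proof. by move=> u v us vs E; rewrite -(nth_index u us) -(nth_index u vs) E. Qed.

Lemma inv_map (A S : seq nat) : uniq A -> perm_eq A S ->
  inv_word [seq (index x S).+1 | x <- A] = [seq (index x A).+1 | x <- S].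
Proof.
move=> uA pAS; have uS : uniq S by rewrite -(perm_uniq pAS).
have szS := perm_size pAS.
have injh : {in A &, injective (fun x => (index x S).+1)}.
  move=> u v ua va [] /index_inj_in; apply; by rewrite -(perm_mem pAS).
apply: (@eq_from_nth _ 0); rewrite /inv_word !size_map size_iota ?szS // => i hi.
rewrite (nth_map 0) ?size_iota ?size_map // nth_iota ?size_map // (nth_map 0) ?szS //.
have -> : 1 + i = (index (nth 0 S i) S).+1 by rewrite index_uniq ?szS.
rewrite index_map_in //; by rewrite (perm_mem pAS) mem_nth ?szS.
Qed.

Lemma inv_inv_map (A S : seq nat) : uniq A -> perm_eq A S ->
  inv_word (inv_word [seq (index x S).+1 | x <- A]) = [seq (index x S).+1 | x <- A].
Proof.
move=> uA pAS; rewrite inv_map // inv_map //; first by rewrite -(perm_uniq pAS).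
by rewrite perm_sym.
Qed.

Lemma perm_map_index (A S : seq nat) : uniq A -> perm_eq A S ->
  perm_eq [seq (index x S).+1 | x <- A] (iota 1 (size A)).
Proof.
move=> uA pAS; have uS : uniq S by rewrite -(perm_uniq pAS).
apply: (perm_trans (perm_map _ pAS)).
have -> : [seq (index x S).+1 | x <- S] = map (addn 1) (map (index^~ S) S).
  by rewrite -map_comp.
by rewrite map_index_self // -iotaDl (perm_size pAS).
Qed.

Lemma index_iota1 n x : x \in iota 1 n -> (index x (iota 1 n)).+1 = x.
Proof.
rewrite mem_iota => /andP[x1 xn].
have -> : x = nth 0 (iota 1 n) x.-1 by rewrite nth_iota; lia.
rewrite index_uniq ?iota_uniq ?size_iota ?nth_iota; lia.
Qed.

Lemma map_index_iota n (mu : seq nat) : {subset mu <= iota 1 n} ->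
  [seq (index x (iota 1 n)).+1 | x <- mu] = mu.
Proof. by move=> sub; rewrite -[RHS]map_id; apply/eq_in_map => x /sub /index_iota1. Qed.

Lemma inv_word_perm n (mu : seq nat) : perm_eq mu (iota 1 n) ->
  [/\ perm_eq (inv_word mu) (iota 1 n), inv_word (inv_word mu) = mu &
      inv_word mu = [seq (index x mu).+1 | x <- iota 1 n]].
Proof.
move=> p; have szm : size mu = n by rewrite (perm_size p) size_iota.
have E : inv_word mu = [seq (index x mu).+1 | x <- iota 1 n] by rewrite /inv_word szm.
have u1 : uniq (iota 1 n) by apply: iota_uniq.
have p' : perm_eq (iota 1 n) mu by rewrite perm_sym.
split => //.
  by rewrite E; have := perm_map_index _ _ u1 p'; rewrite size_iota.
have um : uniq mu by rewrite (perm_uniq p).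
rewrite E inv_map // map_index_iota // => x; by rewrite (perm_mem p).
Qed.

Lemma count_le_sorted (S : seq nat) x : sorted ltn S -> x \in S ->
  count (fun y => y <= x) S = (index x S).+1.
Proof.
elim: S => //= a S IH pS; have aS := order_path_min ltn_trans pS.
have sS : sorted ltn S by apply: path_sorted pS.
rewrite inE eq_sym; case: (a =P x) => [<- _|ax /= xS].
  rewrite leqnn (eq_in_count (a2 := pred0)) ?count_pred0 // => y /(allP aS) /=; lia.
have ax' : a < x by apply: (allP aS).
by rewrite IH // (ltnW ax').
Qed.

Lemma std_eq (A S : seq nat) : perm_eq A S -> sorted ltn S ->
  std A = [seq (index x S).+1 | x <- A].
Proof.
move=> pAS sS; apply/eq_in_map => x xA.
by rewrite (permP pAS) count_le_sorted // -(perm_mem pAS).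
Qed.

Lemma std_inv_inv (A : seq nat) : uniq A -> inv_word (inv_word (std A)) = std A.
Proof.
move=> uA; set S := sort leq A.
have pAS : perm_eq A S by rewrite perm_sym perm_sort.
have sS : sorted ltn S.
  by rewrite ltn_sorted_uniq_leq sort_uniq uA sort_sorted //; apply: leq_total.
by rewrite (std_eq _ _ pAS sS) inv_inv_map.
Qed.

Lemma std_cmp (A sigma : seq nat) m : is_permn m sigma -> uniq A ->
  (std A == sigma) = (inv_word (std A) == inv_word sigma).
Proof.
move=> ps uA; have [_ IIs _] := inv_word_perm _ _ ps.
apply/eqP/eqP => [->//|E].
by rewrite -(std_inv_inv _ uA) -IIs E.
Qed.

Lemma in_drop_index (s : seq nat) i x : uniq s -> x \in s ->
  (x \in drop i s) = (i <= index x s).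
Proof.
move=> us xs; have : uniq (take i s ++ drop i s) by rewrite cat_take_drop.
rewrite cat_uniq => /and3P[_ dis _].
have := in_take i xs; case: (ltnP (index x s) i) => h xt.
  by apply/negP => xd; move/negP: dis; apply; apply/hasP; exists x => //; rewrite xt.
by move: xs; rewrite -{1}(cat_take_drop i s) mem_cat xt.
Qed.

Lemma filter_take n (mu : seq nat) j : perm_eq mu (iota 1 n) ->
  [seq p <- inv_word mu | p <= j] = inv_word (std (take j mu)).
Proof.
move=> pm; have [_ _ E] := inv_word_perm _ _ pm.
have um : uniq mu by rewrite (perm_uniq pm) iota_uniq.
set S1 := [seq x <- iota 1 n | index x mu < j].
have uA : uniq (take j mu) by apply: take_uniq.
have uS1 : uniq S1 by rewrite filter_uniq ?iota_uniq.
have pAS : perm_eq (take j mu) S1.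
  apply: uniq_perm => // x; rewrite mem_filter -(perm_mem pm).
  case xm: (x \in mu); last by rewrite andbF; apply/negP => /mem_take; rewrite xm.
  by rewrite in_take // andbT.
have sS : sorted ltn S1 by apply: sorted_filter; [apply: ltn_trans | apply: iota_ltn_sorted].
rewrite (std_eq _ _ pAS sS) inv_map // E filter_map.
have -> : [seq x <- iota 1 n | preim (fun x => (index x mu).+1) (fun p => p <= j) x] = S1 by [].
apply/eq_in_map => x; rewrite mem_filter => /andP[xj xi].
have xm : x \in mu by rewrite (perm_mem pm).
have xt : x \in take j mu by rewrite in_take.
by rewrite -{1}(cat_take_drop j mu) index_cat xt.
Qed.

Lemma filter_drop n (mu : seq nat) j : perm_eq mu (iota 1 n) -> nth 0 mu j = 1 ->
  [seq p <- inv_word mu | j < p] =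
  j.+1 :: map (addn j.+1) (inv_word (std (drop j.+1 mu))).
Proof.
move=> pm mj; have [_ _ E] := inv_word_perm _ _ pm.
have um : uniq mu by rewrite (perm_uniq pm) iota_uniq.
have szm : size mu = n by rewrite (perm_size pm) size_iota.
have jm : j < size mu.
  by rewrite ltnNge; apply/negP => h; move: mj; rewrite nth_default.
have i1 : index 1 mu = j by rewrite -mj index_uniq.
have memm : forall x, (x \in mu) = (0 < x <= n) by move=> x; rewrite (perm_mem pm) mem_iota; lia.
case: n E szm memm pm => [|n'] E szm memm pm; first by lia.
set S2 := [seq x <- iota 2 n' | j < index x mu].
have uB : uniq (drop j.+1 mu) by apply: drop_uniq.
have uS2 : uniq S2 by rewrite filter_uniq ?iota_uniq.
have pBS : perm_eq (drop j.+1 mu) S2.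
  apply: uniq_perm => // x; rewrite mem_filter mem_iota.
  case xm: (x \in mu); last first.
    rewrite memm in xm; have -> : (x \in drop j.+1 mu) = false by apply/negP => /mem_drop; rewrite memm xm.
    symmetry; apply: negbTE; apply/negP => /and3P[_ a b]; move/negP: xm; apply; apply/andP; split; lia.
  rewrite in_drop_index //; case: (ltnP j (index x mu)) => h /=; last by [].
  rewrite memm in xm; have : x != 1 by apply/eqP => x1; move: h; rewrite x1 i1 ltnn.
  lia.
have sS : sorted ltn S2 by apply: sorted_filter; [apply: ltn_trans | apply: iota_ltn_sorted].
rewrite (std_eq _ _ pBS sS) inv_map // E /= i1 ltnSn; congr (_ :: _).
rewrite filter_map -map_comp.
have -> : [seq x <- iota 2 n' | preim (fun x => (index x mu).+1) (fun p => j < p) x] = S2.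
  apply: eq_in_filter => x; rewrite mem_iota => hx /=.
  have xm : x \in mu by rewrite memm; lia.
  rewrite ltnS leq_eqVlt; case: eqP => // E1; exfalso.
  have : nth 0 mu (index x mu) = x by rewrite nth_index.
  rewrite -E1 mj; lia.
apply/eq_in_map => x; rewrite mem_filter => /andP[xj xi] /=.
have xm : x \in mu by rewrite memm; move: xi; rewrite mem_iota; lia.
have xt : x \notin take j.+1 mu by rewrite in_take // -leqNgt.
rewrite -{1}(cat_take_drop j.+1 mu) index_cat (negbTE xt) size_take.
case: ifP => h; rewrite ?szm in h jm *; lia.
Qed.

Lemma delta_perm j k (tau : seq nat) : is_permn k tau ->
  perm_eq (j.+1 :: [seq x + j.+1 | x <- inv_word tau]) (iota j.+1 k.+1).
Proof.
move=> pt; have [pit _ _] := inv_word_perm _ _ pt.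
rewrite /= perm_cons (eq_map (g := addn j.+1)); last by move=> x; rewrite addnC.
have -> : j.+2 = j.+1 + 1 by rewrite addn1.
by rewrite iotaDl perm_map.
Qed.

Lemma pd_perm j k (sigma tau : seq nat) : is_permn j sigma -> is_permn k tau ->
  perm_eq (inv_word sigma ++ j.+1 :: [seq x + j.+1 | x <- inv_word tau]) (iota 1 (j + k + 1)).
Proof.
move=> ps pt; have [pis _ _] := inv_word_perm _ _ ps.
have -> : j + k + 1 = j + k.+1 by rewrite addn1 addnS.
by rewrite iotaD perm_cat // add1n delta_perm.
Qed.

Lemma filter_mem_eq (s p : seq nat) (P : pred nat) : {in s, forall x, (x \in p) = P x} ->
  [seq x <- s | x \in p] = [seq x <- s | P x].
Proof. by move=> h; apply: eq_in_filter. Qed.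

Lemma shl_char j k (sigma tau mu : seq nat) : is_permn j sigma -> is_permn k tau ->
  perm_eq mu (iota 1 (j + k + 1)) ->
  (mu \in lozenge j k sigma tau) =
  (inv_word mu \in Sh_l (inv_word sigma) (j.+1 :: [seq x + j.+1 | x <- inv_word tau])).
Proof.
move=> ps pt pm; set n := j + k + 1 in pm.
have [pa _ E] := inv_word_perm _ _ pm.
have um : uniq mu by rewrite (perm_uniq pm) iota_uniq.
have ua : uniq (inv_word mu) by rewrite (perm_uniq pa) iota_uniq.
have [pis _ _] := inv_word_perm _ _ ps.
have pdt := delta_perm j _ _ pt.
have mema : forall x, x \in inv_word mu -> 0 < x <= n.
  by move=> x; rewrite (perm_mem pa) mem_iota; lia.
have pad : perm_eq (inv_word mu) (inv_word sigma ++ j.+1 :: [seq x + j.+1 | x <- inv_word tau]).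
  by apply: (perm_trans pa); rewrite perm_sym (pd_perm _ _ _ _ ps pt).
rewrite /lozenge /Sh_l /shuffles !mem_filter !mem_permutations pm pad !andbT /=.

have -> : nth 0 (inv_word mu) 0 = (index 1 mu).+1.
  by rewrite E (nth_map 0) ?size_iota ?nth_iota //; rewrite /n; lia.
have szm : size mu = n by rewrite (perm_size pm) size_iota.
case h: (nth 0 mu j == 1); last first.
  rewrite /= eqSS; case: (index 1 mu =P j) => // E1; move/negP: h; case.
  by rewrite -E1 nth_index // (perm_mem pm) mem_iota; rewrite /n; lia.
have jm : j < size mu.
  by rewrite ltnNge; apply/negP => h'; move/eqP: h; rewrite nth_default.
move/eqP: h => h.
have i1 : index 1 mu = j by rewrite -h index_uniq.
rewrite i1 eqxx /=.
rewrite (std_cmp _ _ _ ps (take_uniq _ _)) // (std_cmp _ _ _ pt (drop_uniq _ _)) //.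
have -> : subseq (inv_word sigma) (inv_word mu) = (inv_word sigma == inv_word (std (take j mu))).
  have F : [seq x <- inv_word mu | x \in inv_word sigma] = [seq p <- inv_word mu | p <= j].
    apply: filter_mem_eq => x /mema hx; by rewrite (perm_mem pis) mem_iota; lia.
  rewrite -(filter_take _ _ _ pm) -F; apply/idP/eqP => [/(subseq_uniqP ua)//|->]; apply: filter_subseq.
have -> : subseq (j.+1 :: [seq x + j.+1 | x <- inv_word tau]) (inv_word mu) =
   (j.+1 :: [seq x + j.+1 | x <- inv_word tau] == j.+1 :: map (addn j.+1) (inv_word (std (drop j.+1 mu)))).
  have F : [seq x <- inv_word mu | x \in j.+1 :: [seq x + j.+1 | x <- inv_word tau]] = [seq p <- inv_word mu | j < p].
    apply: filter_mem_eq => x /mema hx; by rewrite (perm_mem pdt) mem_iota; rewrite /n in hx; lia.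
  rewrite -(filter_drop _ _ _ pm h) -F; apply/idP/eqP => [/(subseq_uniqP ua)//|->]; apply: filter_subseq.
have -> : [seq x + j.+1 | x <- inv_word tau] = map (addn j.+1) (inv_word tau).
  by apply: eq_map => x; rewrite addnC.
rewrite eqseq_cons eqxx andTb (inj_eq (inj_map (@addnI j.+1))).
by rewrite (eq_sym (inv_word sigma)) (eq_sym (inv_word tau)).
Qed.

Lemma last_filter_eq (s : seq nat) (P : pred nat) : 0 \notin s -> s != [::] ->
  (last 0 (filter P s) == last 0 s) = P (last 0 s).
Proof.
case/lastP: s => // t a s0 _; rewrite filter_rcons !last_rcons.
case: ifP => Pa; rewrite ?last_rcons ?eqxx //.
apply/negbTE/eqP => E; have := mem_last 0 (filter P t); rewrite E inE.
case/orP => [/eqP a0|]; first by move: s0; rewrite a0 mem_rcons inE eqxx.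
by rewrite mem_filter Pa.
Qed.

Lemma head_filter_eq (s : seq nat) (P : pred nat) : 0 \notin s -> s != [::] ->
  (head 0 (filter P s) == head 0 s) = P (head 0 s).
Proof.
case: s => // a t s0 _ /=; case: ifP => Pa //=; rewrite ?eqxx //.
apply/negbTE/eqP => E; have : head 0 (filter P t) \in 0 :: filter P t.
  by case: (filter P t) => //= b u; rewrite !inE eqxx orbT.
rewrite E inE; case/orP => [/eqP a0|]; first by move: s0; rewrite a0 inE eqxx.
by rewrite mem_filter Pa.
Qed.

Set Implicit Arguments. Unset Strict Implicit.

Lemma loz_facts j k (sigma tau mu : seq nat) : mu \in lozenge j k sigma tau ->
  [/\ perm_eq mu (iota 1 (j + k + 1)), nth 0 mu j = 1 &
      j.+1 :: [seq x + j.+1 | x <- inv_word tau] = [seq p <- inv_word mu | j < p]].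
Proof.
rewrite mem_filter mem_permutations => /andP[/and3P[/eqP h _ /eqP st] pm].
split => //; rewrite (filter_drop _ _ _ pm h) st; congr (_ :: _).
by apply: eq_map => x; rewrite addnC.
Qed.

Lemma up_char j k (sigma tau mu : seq nat) : 0 < j + k -> mu \in lozenge j k sigma tau ->
  (j + k + 1 \in drop j.+1 mu) =
  (last 0 (inv_word mu) == last 0 (j.+1 :: [seq x + j.+1 | x <- inv_word tau])).
Proof.
move=> jk0 mL; have [pm h ->] := loz_facts mL; set n := j + k + 1 in pm *.
have [pa _ E] := inv_word_perm _ _ pm.
have um : uniq mu by rewrite (perm_uniq pm) iota_uniq.
have szm : size mu = n by rewrite (perm_size pm) size_iota.
have jm : j < size mu.
  by rewrite ltnNge; apply/negP => h'; move: h; rewrite nth_default.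
have i1 : index 1 mu = j by rewrite -h index_uniq.
have a0 : 0 \notin inv_word mu by rewrite (perm_mem pa) mem_iota.
have an : inv_word mu != [::].
  by apply/eqP => e; move: (perm_size pa); rewrite e size_iota /n /=; lia.
rewrite eq_sym last_filter_eq //.
have -> : last 0 (inv_word mu) = (index n mu).+1.
  rewrite -nth_last E size_map size_iota (nth_map 0) ?size_iota ?nth_iota /n; try lia; rewrite (_ : 1 + (j + k + 1).-1 = j + k + 1) //; lia.
have nm : n \in mu by rewrite (perm_mem pm) mem_iota /n; lia.
rewrite in_drop_index //; have : index n mu != j.
  by apply/eqP => e; move: (nth_index 0 nm); rewrite e h /n; lia.
lia.
Qed.

Lemma down_char j k (sigma tau mu : seq nat) : is_permn k tau -> mu \in lozenge j k sigma tau ->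
  (2 \in drop j.+1 mu) =
  (1 < size (j.+1 :: [seq x + j.+1 | x <- inv_word tau])) &&
  (nth 0 (inv_word mu) 1 == nth 0 (j.+1 :: [seq x + j.+1 | x <- inv_word tau]) 1).
Proof.
move=> pt mL; have [pm h Fd] := loz_facts mL.
have [pa _ E] := inv_word_perm _ _ pm.
have um : uniq mu by rewrite (perm_uniq pm) iota_uniq.
have szm : size mu = j + k + 1 by rewrite (perm_size pm) size_iota.
have jm : j < size mu.
  by rewrite ltnNge; apply/negP => h'; move: h; rewrite nth_default.
have i1 : index 1 mu = j by rewrite -h index_uniq.
have szt : size (inv_word tau) = k by rewrite size_map size_iota (perm_size pt) size_iota.
rewrite [size _]/= size_map szt.
clear mL; case: k szt pt pm pa E szm jm Fd => [|k] szt pt pm pa E szm jm Fd.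
  rewrite drop_oversize ?szm //; lia.
rewrite ltnS ltn0Sn andTb Fd.
have sza : size (inv_word mu) = j + k.+1 + 1 by rewrite (perm_size pa) size_iota.
have a0 : 0 \notin inv_word mu by rewrite (perm_mem pa) mem_iota.
have e2 : nth 0 (inv_word mu) 1 = (index 2 mu).+1.
  rewrite E (nth_map 0) ?size_iota ?nth_iota; try lia; done.
have Ea : nth 0 (inv_word mu) 0 = j.+1.
  rewrite E (nth_map 0) ?size_iota ?nth_iota ?i1 //; lia.
move: sza a0 e2 Ea; case: (inv_word mu) => [|a t] /=; first by move=> sza; lia.
move=> sza a0 e2 ->; rewrite ltnSn /= !nth0 eq_sym head_filter_eq; first last.
- by apply/eqP => t0; move: sza; rewrite t0 /=; lia.
- by apply: contra a0; rewrite inE orbC => ->.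
rewrite nth0 in e2; rewrite e2.
have m2 : 2 \in mu by rewrite (perm_mem pm) mem_iota; lia.
rewrite in_drop_index //; have : index 2 mu != j.
  by apply/eqP => e; move: (nth_index 0 m2); rewrite e h.
lia.
Qed.

Unset Implicit Arguments. Set Strict Implicit.

Theorem proposition3p3 (j k : nat) (sigma tau : seq nat) :
  is_permn j sigma -> is_permn k tau ->
  let pi := inv_word sigma in
  let delta := j.+1 :: [seq x + j.+1 | x <- inv_word tau] in
  [/\ genpoly ides (lozenge j k sigma tau) = genpoly des (Sh_l pi delta),
      (0 < j + k)%N ->
        genpoly ides (tri_up j k sigma tau) = genpoly des (Sh_ls pi delta)
    & genpoly ides (tri_down j k sigma tau) = genpoly des (Sh_ll pi delta)].
Proof.
move=> ps pt pi delta.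
set L := lozenge j k sigma tau.
have memL : forall mu, mu \in L -> perm_eq mu (iota 1 (j + k + 1)).
  by move=> mu; rewrite mem_filter mem_permutations => /andP[].
have main : perm_eq (map inv_word L) (Sh_l pi delta).
  apply: uniq_perm.
  - rewrite map_inj_in_uniq ?filter_uniq ?permutations_uniq //.
    move=> m1 m2 /memL p1 /memL p2 e.
    have [_ I1 _] := inv_word_perm _ _ p1; have [_ I2 _] := inv_word_perm _ _ p2.
    by rewrite -I1 e I2.
  - by rewrite !filter_uniq ?permutations_uniq.
  move=> x; apply/mapP/idP => [[mu muL ->]|xS].
    by rewrite -(shl_char _ _ _ _ _ ps pt (memL _ muL)).
  have : x \in permutations (pi ++ delta) by move: xS; rewrite !mem_filter => /andP[_ /andP[]].
  rewrite mem_permutations => px.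
  have px' : perm_eq x (iota 1 (j + k + 1)) by apply: perm_trans px (pd_perm _ _ _ _ ps pt).
  have [pm I _] := inv_word_perm _ _ px'.
  exists (inv_word x) => //.
  by rewrite (shl_char _ _ _ _ _ ps pt pm) I.
have gen : forall (Q Q' : pred (seq nat)), {in L, forall mu, Q mu = Q' (inv_word mu)} ->
    genpoly ides (filter Q L) = genpoly des (filter Q' (Sh_l pi delta)).
  move=> Q Q' hQ; rewrite /genpoly /ides.
  transitivity ((\sum_(y <- map inv_word (filter Q L)) 'X^(des y))%R : {poly int}).
    by rewrite big_map.
  apply: perm_big.
  rewrite (eq_in_filter hQ) -filter_map; exact: perm_filter.
split.
- by have := gen predT predT (fun _ _ => erefl); rewrite !filter_predT.
- move=> jk0; rewrite /tri_up /Sh_ls; apply: gen => mu muL.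
  exact: (up_char jk0 muL).
- rewrite /tri_down /Sh_ll; apply: gen => mu muL.
  exact: (down_char pt muL).
Qed.
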